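(* Let $d>2$ be even and let $H$ be a $d\times d$ complex Hadamard matrix. Let $H'$ be the dephased form of $H$. Suppose $H'$ has $m$ pairwise disjoint ER pairs of columns, where $1\le m<d/2$. Then $H$ belongs to an $m$-dimensional affine family: there exist $m$ linearly independent real $d\times d$ matrices $R_1,\dots,R_m$, each with zero first row and zero first column, such that $H'\circ\exp\!\big(i\sum_{k=1}^m \xi_k R_k\big)$ is a complex Hadamard matrix for every $(\xi_1,\dots,\xi_m)\in\mathbb{R}^m$.
   Context: A $d\times d$ complex Hadamard matrix is a matrix $H$ all of whose entries have modulus $1$ and whose columns are pairwise orthogonal (equivalently $HH^*=dI$). It is dephased if every entry of its first row and first column equals $1$; every complex Hadamard matrix $H$ can be written uniquely as $D_1H'D_2$ with $D_1,D_2$ diagonal unitary and $H'$ dephased, and $H'$ is called the dephased form of $H$. Two distinct columns $C_A,C_B$ of a complex Hadamard matrix form an ER (equivalent to real) pair if $\overline{(C_A)_j}(C_B)_j\in\{1,-1\}$ for every row index $j=0,\dots,d-1$. For matrices $A,B$ of equal size, $A\circ B$ is the entrywise (Hadamard) product and $\exp(iR)$ denotes the entrywise exponential $(\exp(iR))_{jk}=e^{iR_{jk}}$. *)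

(* Defs.v *)
From HB Require Import structures.
From mathcomp Require Import all_boot all_order all_algebra.
From mathcomp Require Import complex.
From mathcomp Require Import reals trigo.
Set Implicit Arguments. Unset Strict Implicit. Unset Printing Implicit Defensive.
Import Order.TTheory GRing.Theory Num.Theory.
Local Open Scope ring_scope.
Local Open Scope complex_scope.

Definition expi (R : realType) (t : R) : R[i] := (cos t) +i* (sin t).

Definition is_complex_hadamard (R : realType) (d : nat) (H : 'M[R[i]]_d) : Prop :=
  (forall i j, `|H i j| = 1) /\ H *m (map_mx Num.conj H)^T = (d%:R : R[i])%:M.

Definition is_dephased (R : realType) (d : nat) (H : 'M[R[i]]_d) : Prop :=
  forall i j : 'I_d, (val i = 0%N \/ val j = 0%N) -> H i j = 1.

Definition diag_unitary (R : realType) (d : nat) (D : 'M[R[i]]_d) : Prop :=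
  exists v : 'rV[R[i]]_d, (forall j, `|v 0 j| = 1) /\ D = diag_mx v.

(* H' is the dephased form of H: H' is dephased and H = D1 H' D2 with D1, D2
   diagonal unitary (this decomposition is unique) *)
Definition dephased_form_of (R : realType) (d : nat) (H H' : 'M[R[i]]_d) : Prop :=
  is_dephased H' /\
  exists D1 D2, diag_unitary D1 /\ diag_unitary D2 /\ H = D1 *m H' *m D2.

Definition ER_pair (R : realType) (d : nat) (H : 'M[R[i]]_d) (a b : 'I_d) : Prop :=
  a <> b /\ forall j : 'I_d, (H j a)^* * H j b = 1 \/ (H j a)^* * H j b = -1.

Definition has_disjoint_ER_pairs (R : realType) (d m : nat) (H : 'M[R[i]]_d) : Prop :=
  exists p : 'I_m -> 'I_d * 'I_d,
    (forall k, ER_pair H (p k).1 (p k).2) /\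
    (forall k l, k <> l ->
       [/\ (p k).1 <> (p l).1, (p k).1 <> (p l).2,
           (p k).2 <> (p l).1 & (p k).2 <> (p l).2]).

(* Main.v *)
Require Import Defs.
From HB Require Import structures.
From mathcomp Require Import all_boot all_order all_algebra.
From mathcomp Require Import complex.
From mathcomp Require Import reals trigo.
From mathcomp Require Import ring.
Import Order.TTheory GRing.Theory Num.Theory.
Set Implicit Arguments. Unset Strict Implicit.
Local Open Scope ring_scope.


Lemma expiD (R : realType) (a b : R) : expi (a + b) = expi a * expi b.
Proof. by rewrite /expi cosD sinD /=; congr Complex; ring. Qed.

Lemma expi0 (R : realType) : expi (0 : R) = 1.
Proof. by rewrite /expi cos0 sin0. Qed.

Lemma expi_conj (R : realType) (t : R) : Num.conj (expi t) = expi (- t).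
Proof. by rewrite /expi cosN sinN. Qed.

Lemma expiK (R : realType) (t : R) : Num.conj (expi t) * expi t = 1.
Proof. by rewrite expi_conj -expiD addNr expi0. Qed.

Lemma unitK (R : realType) (z : R[i]) : `|z| = 1 -> Num.conj z * z = 1.
Proof. by move=> h; rewrite -normCKC h expr1n. Qed.

Lemma unitK' (R : realType) (z : R[i]) : `|z| = 1 -> z * Num.conj z = 1.
Proof. by move=> h; rewrite mulrC unitK. Qed.

Lemma norm_expi (R : realType) (t : R) : `|expi t| = 1.
Proof.
apply/eqP; rewrite -sqrp_eq1 ?normr_ge0 // normCKC expiK //.
Qed.

Lemma one_neq_m1 (R : realType) : (1 == - 1 :> R[i]) = false.
Proof.
apply/negbTE/eqP => h.
have : (2%:R : R[i]) == 0 by rewrite mulr2n {2}h subrr.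
by rewrite pnatr_eq0.
Qed.



Definition al (R : realType) (e : R[i]) := (1 + e) / 2%:R.
Definition be (R : realType) (e : R[i]) := (1 - e) / 2%:R.

Lemma conj_al (R : realType) (e : R[i]) : Num.conj (al e) = al (Num.conj e).
Proof. by rewrite /al rmorphM rmorphD rmorph1 fmorphV rmorph_nat. Qed.
Lemma conj_be (R : realType) (e : R[i]) : Num.conj (be e) = be (Num.conj e).
Proof. by rewrite /be rmorphM rmorphB rmorph1 fmorphV rmorph_nat. Qed.

Lemma two_neq0 (R : realType) : (2%:R : R[i]) != 0.
Proof. by rewrite pnatr_eq0. Qed.

Lemma blk1 (R : realType) (e : R[i]) : Num.conj e * e = 1 ->
  Num.conj (al e) * al e + Num.conj (be e) * be e = 1.
Proof.
move=> h; rewrite conj_al conj_be /al /be.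
have -> : (1 + e^*) / 2%:R * ((1 + e) / 2%:R) + (1 - e^*) / 2%:R * ((1 - e) / 2%:R)
  = (1 + e^* * e) / 2%:R :> R[i] by field; rewrite ?pnatr_eq0 //; idtac. 
by rewrite h divff // two_neq0.
Qed.

Lemma blk2 (R : realType) (e : R[i]) : Num.conj e * e = 1 ->
  Num.conj (al e) * be e + Num.conj (be e) * al e = 0.
Proof.
move=> h; rewrite conj_al conj_be /al /be.
have -> : (1 + e^*) / 2%:R * ((1 - e) / 2%:R) + (1 - e^*) / 2%:R * ((1 + e) / 2%:R)
  = (1 - e^* * e) / 2%:R :> R[i] by field; rewrite ?pnatr_eq0 //; idtac. 
by rewrite h subrr mul0r.
Qed.

Lemma blk3 (R : realType) (e : R[i]) : Num.conj e * e = 1 ->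
  Num.conj (be e) * al e + Num.conj (al e) * be e = 0.
Proof. by move=> h; rewrite addrC blk2. Qed.

Lemma al_be_p (R : realType) (e : R[i]) : al e + be e = 1.
Proof. rewrite /al /be; field; rewrite ?pnatr_eq0 //.  Qed.
Lemma al_be_m (R : realType) (e : R[i]) : al e - be e = e.
Proof. rewrite /al /be; field; rewrite ?pnatr_eq0 //.  Qed.

Lemma sum2 (R : realType) d (a b : 'I_d) (f : 'I_d -> R[i]) : a != b ->
  (forall l, l != a -> l != b -> f l = 0) -> \sum_l f l = f a + f b.
Proof.
move=> ab h; rewrite (bigD1 a) //= (bigD1 b) /=; last by rewrite eq_sym.
rewrite big1 ?addr0 // => l /andP [la lb]; exact: h.
Qed.

Definition adj (R : realType) d (A : 'M[R[i]]_d) := (map_mx Num.conj A)^T.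

Lemma adjM (R : realType) d (A B : 'M[R[i]]_d) : adj (A *m B) = adj B *m adj A.
Proof. by rewrite /adj map_mxM trmx_mul. Qed.

Lemma adjE (R : realType) d (A : 'M[R[i]]_d) i j : adj A i j = Num.conj (A j i).
Proof. by rewrite /adj !mxE. Qed.

Lemma diag_unit (R : realType) d (v : 'rV[R[i]]_d) : (forall j, `|v 0 j| = 1) ->
  diag_mx v *m adj (diag_mx v) = 1%:M.
Proof.
move=> h; apply/matrixP => i j; rewrite mul_diag_mx !mxE.
case: (eqVneq i j) => [->|ne]; first by rewrite mulr1n unitK'.
by rewrite mulr0n rmorph0 mulr0.
Qed.

Lemma adj_unit (R : realType) d (v : 'rV[R[i]]_d) : (forall j, `|v 0 j| = 1) ->
  adj (diag_mx v) *m diag_mx v = 1%:M.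
Proof. by move=> h; apply: mulmx1C; apply: diag_unit. Qed.

Lemma hadamard_dephase (R : realType) d (H H' : 'M[R[i]]_d) (v1 v2 : 'rV[R[i]]_d) :
  (forall j, `|v1 0 j| = 1) -> (forall j, `|v2 0 j| = 1) ->
  H = diag_mx v1 *m H' *m diag_mx v2 -> is_complex_hadamard H -> is_complex_hadamard H'.
Proof.
move=> u1 u2 HE [Hu HH].
split.
  move=> i j; move: (Hu i j); rewrite HE mul_mx_diag mul_diag_mx !mxE !normrM u1 u2.
  by rewrite mul1r mulr1.
have e1 : H *m adj H = diag_mx v1 *m (H' *m adj H') *m adj (diag_mx v1).
  rewrite HE !adjM !mulmxA -[diag_mx v1 *m H' *m diag_mx v2 *m _]mulmxA diag_unit //.
  by rewrite mulmx1.
have e2 : H' *m adj H' = adj (diag_mx v1) *m (H *m adj H) *m diag_mx v1.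
  by rewrite e1 !mulmxA adj_unit // mul1mx -mulmxA adj_unit // mulmx1.
rewrite /adj in HH e2; rewrite e2 HH mul_mx_scalar -scalemxAl adj_unit // scalemx1 //.
Qed.



Definition inpair d m (p : 'I_m -> 'I_d * 'I_d) (k : 'I_m) (j : 'I_d) : bool :=
  (j == (p k).1) || (j == (p k).2).

Definition disj d m (p : 'I_m -> 'I_d * 'I_d) := forall k l, k <> l ->
       [/\ (p k).1 <> (p l).1, (p k).1 <> (p l).2,
           (p k).2 <> (p l).1 & (p k).2 <> (p l).2].

Lemma inpair_uniq d m (p : 'I_m -> 'I_d * 'I_d) : disj p ->
  forall k l j, inpair p k j -> inpair p l j -> k = l.
Proof.
move=> D k l j hk hl; apply/eqP/negPn/negP => /eqP kl.
have [h1 h2 h3 h4] := D k l kl.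
by case/orP: hk => /eqP e; case/orP: hl => /eqP e'; rewrite e in e'; auto.
Qed.

Lemma pick_some d m (p : 'I_m -> 'I_d * 'I_d) : disj p ->
  forall k j, inpair p k j -> [pick k | inpair p k j] = Some k.
Proof.
move=> D k j hk; case: pickP => [k' h|h]; last by rewrite h in hk.
by congr Some; apply: (inpair_uniq D h hk).
Qed.

Lemma pick_none d m (p : 'I_m -> 'I_d * 'I_d) j :
  (forall k, ~~ inpair p k j) -> [pick k | inpair p k j] = None.
Proof. by move=> h; case: pickP => // k hk; move: (h k); rewrite hk. Qed.

Definition Tm (R : realType) d m (p : 'I_m -> 'I_d * 'I_d) (xi : 'I_m -> R) : 'M[R[i]]_d :=
  \matrix_(l, j) match [pick k | inpair p k j] with
   | Some k => if l == (p k).1 then (if j == (p k).1 then al (expi (xi k)) else be (expi (xi k)))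
               else if l == (p k).2 then (if j == (p k).2 then al (expi (xi k)) else be (expi (xi k)))
               else 0
   | None => (l == j)%:R end.

Lemma Tval (R : realType) d m (p : 'I_m -> 'I_d * 'I_d) (xi : 'I_m -> R) : disj p ->
  forall k l j, inpair p k j -> Tm p xi l j =
   if l == (p k).1 then (if j == (p k).1 then al (expi (xi k)) else be (expi (xi k)))
   else if l == (p k).2 then (if j == (p k).2 then al (expi (xi k)) else be (expi (xi k)))
   else 0.
Proof. by move=> D k l j hk; rewrite mxE (pick_some D hk). Qed.

Lemma Tout (R : realType) d m (p : 'I_m -> 'I_d * 'I_d) (xi : 'I_m -> R) : disj p ->
  forall k l j, inpair p k j -> ~~ inpair p k l -> Tm p xi l j = 0.
Proof.
move=> D k l j hk hl; rewrite (Tval _ D _ hk).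
by move: hl; rewrite /inpair negb_or => /andP [/negbTE -> /negbTE ->].
Qed.

Lemma Tnone (R : realType) d m (p : 'I_m -> 'I_d * 'I_d) (xi : 'I_m -> R) l j :
  (forall k, ~~ inpair p k j) -> Tm p xi l j = (l == j)%:R.
Proof. by move=> h; rewrite mxE pick_none. Qed.

Lemma TTE (R : realType) d m (p : 'I_m -> 'I_d * 'I_d) (xi : 'I_m -> R) : disj p ->
  (forall k, (p k).1 != (p k).2) ->
  adj (Tm p xi) *m Tm p xi = 1%:M.
Proof.
move=> D ab; apply/matrixP => x y; rewrite !mxE.
under eq_bigr => l _ do rewrite adjE.
have eK k : Num.conj (expi (xi k)) * expi (xi k) = 1 by apply: expiK.
case: (pickP (fun k => inpair p k x)) => [k hk | hn].
  rewrite (sum2 (ab k)); last first.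
    move=> l la lb; rewrite (Tout _ D hk) ?rmorph0 ?mul0r //.
    by rewrite /inpair negb_or la lb.
  have ha : inpair p k (p k).1 by rewrite /inpair eqxx.
  have hb : inpair p k (p k).2 by rewrite /inpair eqxx orbT.
  have hab := negbTE (ab k).
  have hba : ((p k).2 == (p k).1) = false by rewrite eq_sym.
  rewrite !(Tval _ D _ hk) ?eqxx ?hab ?hba ?eqxx.
  case: (pickP (fun k => inpair p k y)) => [k' hk' | hn].
    case: (eqVneq k k') => [e | kk'].
      rewrite -e in hk'.
      rewrite !(Tval _ D _ hk') ?eqxx ?hab ?hba ?eqxx.
      case/orP: hk => /eqP ->; case/orP: hk' => /eqP ->;
        rewrite ?eqxx ?hab ?hba /=.
      - by rewrite blk1.
      - by rewrite blk2.
      - by rewrite blk3.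
      - by rewrite addrC blk1.
    rewrite !(Tout _ D hk') ?mulr0 ?addr0.
    - have -> : (x == y) = false; last by [].
      apply/negbTE/eqP => exy; rewrite exy in hk.
      by move/eqP: kk'; apply; apply: (inpair_uniq D hk hk').
    - apply/negP => h; move/eqP: kk'; apply; exact: (inpair_uniq D hb h).
    - apply/negP => h; move/eqP: kk'; apply; exact: (inpair_uniq D ha h).
  rewrite !Tnone; try by move=> ?; rewrite ?hn ?hn'.
  have nay : ((p k).1 == y) = false.
    by apply/negbTE/negP => /eqP e; move: (hn k); rewrite -e ha.
  have nby : ((p k).2 == y) = false.
    by apply/negbTE/negP => /eqP e; move: (hn k); rewrite -e hb.
  have nxy : (x == y) = false.
    by apply/negbTE/negP => /eqP e; move: (hn k); rewrite -e hk.
  by rewrite nay nby nxy !mulr0 addr0.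
rewrite (bigD1 x) //= big1 ?addr0; last first.
  move=> l lx; rewrite Tnone; try by move=> ?; rewrite ?hn.
  by rewrite (negbTE lx) rmorph0 mul0r.
rewrite Tnone; try by move=> ?; rewrite ?hn.
rewrite eqxx rmorph1 mul1r.
case: (pickP (fun k => inpair p k y)) => [k' hk' | hn'].
  rewrite (Tval _ D _ hk').
  have -> : (x == (p k').1) = false by apply/negbTE/negP => e; move: (hn k'); rewrite /inpair e.
  have -> : (x == (p k').2) = false by apply/negbTE/negP => e; move: (hn k'); rewrite /inpair e orbT.
  have -> : (x == y) = false; last by [].
  by apply/negbTE/negP => /eqP e; move: (hn k'); rewrite e hk'.
by rewrite Tnone; try by move=> ?; rewrite ?hn ?hn'.
Qed.



Definition sgn (R : realType) d m (H' : 'M[R[i]]_d) (p : 'I_m -> 'I_d * 'I_d) k i : bool :=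
  Num.conj (H' i (p k).1) * H' i (p k).2 == -1.

Lemma HTE (R : realType) d m (H' : 'M[R[i]]_d) (p : 'I_m -> 'I_d * 'I_d) (xi : 'I_m -> R) :
  disj p -> (forall k, ER_pair H' (p k).1 (p k).2) -> (forall i j, `|H' i j| = 1) ->
  forall i j, (H' *m Tm p xi) i j =
    H' i j * expi (\sum_k xi k * ((sgn H' p k i)%:R * (inpair p k j)%:R)).
Proof.
move=> D ER U i j; rewrite mxE.
case: (pickP (fun k => inpair p k j)) => [k hk | hn]; last first.
  have hn' : forall k, ~~ inpair p k j by move=> k; rewrite hn.
  rewrite [X in expi X]big1 ?expi0 ?mulr1; last by move=> k _; rewrite (negbTE (hn' k)) mulr0 mulr0.
  rewrite (bigD1 j) //= big1 ?addr0; last first.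
    by move=> l lj; rewrite Tnone // (negbTE lj) mulr0.
  by rewrite Tnone // eqxx mulr1.
have [abP ERk] := ER k.
have ab : (p k).1 != (p k).2 by apply/eqP.
have hab := negbTE ab.
have hba : ((p k).2 == (p k).1) = false by rewrite eq_sym.
rewrite (sum2 ab); last first.
  move=> l la lb; rewrite (Tout _ D hk) ?mulr0 //.
  by rewrite /inpair negb_or la lb.
rewrite [X in expi X](bigD1 k) //= [X in expi (_ + X)]big1 ?addr0; last first.
  move=> l lk; have -> : inpair p l j = false; last by rewrite mulr0 mulr0.
  apply/negbTE/negP => h; move/eqP: lk; apply; exact: (inpair_uniq D h hk).
rewrite hk mulr1.
rewrite !(Tval _ D _ hk) ?eqxx ?hab ?hba ?eqxx.
set a := H' i (p k).1; set b := H' i (p k).2.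
set c := Num.conj a * b.
have hb : b = a * c by rewrite /c mulrA unitK' ?mul1r // U.
have hc : c = 1 \/ c = -1 by exact: ERk.
have hcc : c * c = 1 by case: hc => ->; rewrite ?mulr1 ?mulrNN ?mulr1.
have ha : a = b * c by rewrite hb -mulrA hcc mulr1.
rewrite /sgn -/a -/b -/c.
case: hc => hc; rewrite hc ?one_neq_m1 ?eqxx /= ?mul0r ?mulr0 ?expi0 ?mul1r ?mulr1.
- case/orP: hk => /eqP ->; rewrite ?eqxx ?hab ?hba -/a -/b.
  + by rewrite hb hc mulr1 -mulrDr al_be_p mulr1.
  + by rewrite ha hc mulr1 -mulrDr addrC al_be_p mulr1.
- case/orP: hk => /eqP ->; rewrite ?eqxx ?hab ?hba -/a -/b.
  + by rewrite hb hc mulrN1 mulNr -mulrBr al_be_m.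
  + by rewrite ha hc mulrN1 mulNr addrC -mulrBr al_be_m.
Qed.



Lemma free_col d m (p : 'I_m -> 'I_d * 'I_d) : (m.*2 < d)%N ->
  exists c0 : 'I_d, forall k, ~~ inpair p k c0.
Proof.
move=> md.
set A := [set (p k).1 | k in 'I_m]; set B := [set (p k).2 | k in 'I_m].
have hA : (#|A| <= m)%N by apply: leq_trans (leq_imset_card _ _) _; rewrite ?cardsT ?card_ord.
have hB : (#|B| <= m)%N by apply: leq_trans (leq_imset_card _ _) _; rewrite ?cardsT ?card_ord.
have hs : (#|A :|: B| < d)%N.
  rewrite cardsU; apply: leq_ltn_trans (leq_subr _ _) _.
  by apply: leq_ltn_trans md; rewrite -addnn leq_add.
have : ~~ ([set: 'I_d] \subset (A :|: B)).
  apply/negP => /subset_leq_card; rewrite cardsT card_ord => h.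
  by move: (leq_ltn_trans h hs); rewrite ltnn.
case/subsetPn => c0 _ hc0; exists c0 => k; apply/negP => /orP [] /eqP e; apply/negP: hc0;
  rewrite negbK inE; apply/orP; [left|right]; apply/imsetP; exists k => //.
Qed.

Lemma col_orth (R : realType) d (H' : 'M[R[i]]_d) : (0 < d)%N ->
  H' *m adj H' = (d%:R : R[i])%:M -> adj H' *m H' = (d%:R : R[i])%:M.
Proof.
move=> d0 h.
have c0 : (d%:R : R[i]) != 0 by rewrite pnatr_eq0 -lt0n.
have : H' *m ((d%:R : R[i])^-1 *: adj H') = 1%:M.
  by rewrite -scalemxAr h scale_scalar_mx mulVf.
move/mulmx1C; rewrite -scalemxAl => e.
rewrite -[LHS]scale1r -[in LHS](mulfV c0) -scalerA e scale_scalar_mx mulr1 //.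
Qed.


Unset Implicit Arguments. Set Strict Implicit.


Theorem theorem1 (R : realType) (d m : nat) (H H' : 'M[R[i]]_d) :
  (2 < d)%N -> ~~ odd d ->
  is_complex_hadamard H ->
  dephased_form_of H H' ->
  (1 <= m)%N -> (m.*2 < d)%N ->
  has_disjoint_ER_pairs m H' ->
  exists Rk : 'I_m -> 'M[R]_d,
    free [seq Rk k | k <- enum 'I_m] /\
    (forall k (i j : 'I_d), (val i = 0%N \/ val j = 0%N) -> Rk k i j = 0) /\
    (forall xi : 'I_m -> R,
       is_complex_hadamard
         (\matrix_(i, j) (H' i j * expi (\sum_(k < m) xi k * Rk k i j)))).
Proof.
move=> d2 dev HH [Hdeph [D1 [D2 [[v1 [u1 E1]] [[v2 [u2 E2]] HE]]]]] m1 md [p [pER pD]].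
rewrite E1 E2 in HE.
have [U HH'] := hadamard_dephase u1 u2 HE HH.
have D : disj p by exact: pD.
have d0 : (0 < d)%N by apply: leq_trans d2.
have CO := col_orth d0 HH'.
have ab k : (p k).1 != (p k).2 by apply/eqP; case: (pER k).
pose flag k := (val (p k).1 == 0%N) || (val (p k).2 == 0%N).
pose Rk k : 'M[R]_d :=
  \matrix_(i, j) ((sgn H' p k i)%:R * ((inpair p k j)%:R - (flag k)%:R)).
exists Rk; split; [|split].
- have -> : [seq Rk k | k <- enum 'I_m] = map_tuple Rk (ord_tuple m) :> seq _.
    by [].
  apply/freeP => c hc k.
  have XE (i : 'I_m) : (map_tuple Rk (ord_tuple m))`_i = Rk i.
    by rewrite /= (nth_map i) ?nth_ord_enum // size_enum_ord.
  have hc' : \sum_(i < m) c i *: Rk i = 0.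
    by rewrite -[RHS]hc; apply: eq_bigr => i _; rewrite XE.
  have [c0 hc0] := free_col p md.
  have [r hr] : exists r, sgn H' p k r.
    case: (pickP (sgn H' p k)) => [r hr|hn]; first by exists r.
    exfalso.
    have e1 := congr1 (fun M : 'M_d => M (p k).1 (p k).2) CO.
    rewrite /= !mxE (negbTE (ab k)) mulr0n in e1.
    have : \sum_(r < d) (1 : R[i]) = 0.
      rewrite -[RHS]e1; apply: eq_bigr => r _; rewrite adjE.
      have [_ ER] := pER k.
      case: (ER r) => // e; move: (hn r); rewrite /sgn e eqxx //.
    by rewrite sumr_const card_ord => /eqP; rewrite pnatr_eq0 => /eqP d00; rewrite d00 in d0.
  have ent j : \sum_(l < m) c l * Rk l r j = 0.
    have e := congr1 (fun M : 'M_d => M r j) hc'.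
    rewrite /= summxE mxE in e.
    rewrite -[RHS]e; apply: eq_bigr => l _; by rewrite [RHS]mxE.
  have e2 : \sum_(l < m) c l * Rk l r (p k).1 - \sum_(l < m) c l * Rk l r c0 = c k.
    rewrite -sumrB (bigD1 k) //= big1 ?addr0.
      rewrite !mxE hr (negbTE (hc0 k)) /inpair eqxx /= mulr1n mulr0n; ring.
    move=> l lk; rewrite !mxE (negbTE (hc0 l)).
    have -> : inpair p l (p k).1 = false.
      apply/negbTE/negP => h; move/eqP: lk; apply; apply: (inpair_uniq D h).
      by rewrite /inpair eqxx.
    ring.
  by rewrite -e2 !ent subrr.
- move=> k i j [hi|hj]; rewrite mxE.
  + have -> : sgn H' p k i = false.
      by rewrite /sgn !Hdeph ?hi ?rmorph1 ?mul1r ?one_neq_m1 //; left.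
    by rewrite mulr0n mul0r.
  + have -> : inpair p k j = flag k.
      by rewrite /inpair /flag -!val_eqE /= hj !(eq_sym 0%N).
    by rewrite subrr mulr0.
- move=> xi.
  pose vD : 'rV[R[i]]_d :=
    \row_i expi (- \sum_k xi k * ((sgn H' p k i)%:R * (flag k)%:R)).
  have uD j : `|vD 0 j| = 1 by rewrite mxE norm_expi.
  have TT : Tm p xi *m adj (Tm p xi) = 1%:M by apply: mulmx1C; apply: TTE.
  have ME : \matrix_(i, j) (H' i j * expi (\sum_(k < m) xi k * Rk k i j))
            = diag_mx vD *m (H' *m Tm p xi).
    apply/matrixP => i j; rewrite mul_diag_mx [RHS]mxE HTE // [LHS]mxE [vD 0 i]mxE.
    have -> : \sum_(k < m) xi k * Rk k i j =
       \sum_k xi k * ((sgn H' p k i)%:R * (inpair p k j)%:R)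
       + - \sum_k xi k * ((sgn H' p k i)%:R * (flag k)%:R).
      rewrite -sumrN -big_split; apply: eq_bigr => k _; rewrite mxE /=; ring.
    by rewrite expiD mulrA [LHS]mulrC.
  rewrite ME; split.
    by move=> i j; rewrite mul_diag_mx mxE HTE // !normrM uD U norm_expi !mul1r.
  change (diag_mx vD *m (H' *m Tm p xi) *m adj (diag_mx vD *m (H' *m Tm p xi))
          = (d%:R : R[i])%:M).
  rewrite !adjM !mulmxA -[diag_mx vD *m H' *m Tm p xi *m adj (Tm p xi)]mulmxA TT mulmx1.
  rewrite -[diag_mx vD *m H' *m adj H']mulmxA HH' mul_mx_scalar -scalemxAl diag_unit //.
  by rewrite scalemx1.
Qed.
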